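(* Let $\mathcal G$ be a Lie superalgebra over a field of characteristic zero, with $\mathcal U_{1-}$, $\bullet$ and the extended bracket $[\cdot,\cdot]$ as described below. For any homogeneous $A,B,C\in\mathcal U_{1-}$, $$[A,B]\bullet C=[A,B\bullet C]+(-1)^{|B||C|}[A\bullet C,B].$$
   Context: Set $\mathcal U_1=\mathcal G$ with its $\mathbb Z_2$-grading. For $p\ge1$ define recursively $\mathcal U_{-p+1}=\mathrm{Hom}(\mathcal U_1,\mathcal U_{-p+2})$, $\mathbb Z_2$-graded by declaring $A$ even (resp. odd) if it preserves (resp. reverses) parity; $|u|$ is the parity of a homogeneous element. Elements of $\mathcal U_{1-p}$ are operators of order $p$ (elements of $\mathcal G$ have order $0$); $\mathcal U_{1-}=\bigoplus_{p\ge0}\mathcal U_{1-p}$. Define $\circ$: $A\circ y=A(y)$, $y\circ A=0$ for $A$ of order $\ge1$ and $y\in\mathcal U_1$; for $A,B$ of orders $\ge1$, recursively $(A\circ B)(x)=A\circ B(x)+(-1)^{|B||x|}A(x)\circ B$. Define $\bullet$: $A_p\bullet B_q=\frac{p!q!}{(p+q-1)!}A_p\circ B_q$ for orders $p,q\ge1$; $A_p\bullet x=pA_p(x)$, $x\bullet A_p=0$, $x\bullet y=0$ for $x,y\in\mathcal U_1$. The bracket of $\mathcal G$ is extended to $\mathcal U_{1-}$: on $\mathcal G$ it is the given bracket, and for operators $A,B$ of orders $p,q$ with $p+q\ge1$, $[A,B]$ is the operator of order $p+q$ (parity $|A|+|B|$) defined recursively by $[A,B]\bullet x=[A,B\bullet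 x]+(-1)^{|x||B|}[A\bullet x,B]$ for all $x\in\mathcal G$. *)

(* Defs.v *)
From HB Require Import structures.
From mathcomp Require Import all_boot all_order all_algebra.
Set Implicit Arguments. Unset Strict Implicit. Unset Printing Implicit Defensive.
Import GRing.Theory.
Local Open Scope ring_scope.

Definition ssgn (K : fieldType) (b c : bool) : K := if b && c then -1 else 1.

Section LSA.
Variables (K : fieldType) (G : lmodType K).

(* The Z2-grading
   G = G_0 (+) G_1 is given by the two linear projections [ls_pr false],
   [ls_pr true]; x is homogeneous of parity b iff ls_pr b x = x. *)
Record lie_superalgebra := LieSuperalgebra {
  ls_pr : bool -> G -> G;
  ls_pr_lin : forall b (a : K) x y, ls_pr b (a *: x + y) = a *: ls_pr b x + ls_pr b y;
  ls_pr_sum : forall x, ls_pr false x + ls_pr true x = x;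
  ls_pr_pr : forall b c x, ls_pr b (ls_pr c x) = if b == c then ls_pr c x else 0;
  ls_br : G -> G -> G;
  ls_br_linl : forall (a : K) x y z, ls_br (a *: x + y) z = a *: ls_br x z + ls_br y z;
  ls_br_linr : forall (a : K) x y z, ls_br x (a *: y + z) = a *: ls_br x y + ls_br x z;
  ls_br_par : forall b c x y, ls_pr b x = x -> ls_pr c y = y ->
      ls_pr (b (+) c) (ls_br x y) = ls_br x y;
  ls_br_anti : forall b c x y, ls_pr b x = x -> ls_pr c y = y ->
      ls_br x y = - (ssgn K b c *: ls_br y x);
  ls_br_jacobi : forall b c d x y z, ls_pr b x = x -> ls_pr c y = y -> ls_pr d z = z ->
      ls_br x (ls_br y z) = ls_br (ls_br x y) z + ssgn K b c *: ls_br y (ls_br x z)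
}.

Variable L : lie_superalgebra.

Definition homog (b : bool) (x : G) := ls_pr L b x = x.

(* An operator of order p (element of U_{1-p}) is represented by a function
   Op := seq G -> G whose value on a list [x1;...;xp] is A(x1)(x2)...(xp);
   values on lists of other lengths are irrelevant.  An element y of G
   (order 0) is represented by [cst y]. *)
Definition Op := seq G -> G.
Definition app (A : Op) (x : G) : Op := fun xs => A (x :: xs).
Definition cst (y : G) : Op := fun _ => y.
Definition op0 : Op := fun _ => 0.
Definition opadd (A B : Op) : Op := fun xs => A xs + B xs.
Definition opscale (a : K) (A : Op) : Op := fun xs => a *: A xs.
Definition opeq (n : nat) (A B : Op) := forall xs, size xs = n -> A xs = B xs.

Fixpoint is_op (p : nat) (A : Op) : Prop :=
  match p with
  | 0 => True
  | p'.+1 => (forall x, is_op p' (app A x)) /\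
             (forall (a : K) x y, opeq p' (app A (a *: x + y))
                                   (opadd (opscale a (app A x)) (app A y)))
  end.

Fixpoint has_parity (p : nat) (b : bool) (A : Op) : Prop :=
  match p with
  | 0 => homog b (A [::])
  | p'.+1 => forall c x, homog c x -> has_parity p' (b (+) c) (app A x)
  end.

Fixpoint circf (f p q : nat) (bB : bool) (A B : Op) : Op :=
  match q with
  | 0 => if p is 0 then op0 else app A (B [::])
  | q'.+1 =>
    match p with
    | 0 => op0
    | p'.+1 =>
      match f with
      | 0 => op0
      | f'.+1 => fun xs =>
          match xs with
          | [::] => 0
          | x :: xs' =>
            let t (i : bool) :=
              circf f' p q' (bB (+) i) A (app B (ls_pr L i x)) xs'
              + ssgn K bB i *: circf f' p' q bB (app A (ls_pr L i x)) B xs' in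
            t false + t true
          end
      end
    end
  end.

Definition circ p q bB A B := circf (p + q) p q bB A B.

Definition bul (p q : nat) (bB : bool) (A B : Op) : Op :=
  match p with
  | 0 => op0
  | _ => match q with
         | 0 => opscale p%:R (app A (B [::]))
         | _ => opscale ((p`! * q`!)%:R / ((p + q).-1)`!%:R) (circ p q bB A B)
         end
  end.

(* Extended bracket [A,B] of A of order p, B of order q and parity bB
   (fuel f = p + q): [A,B](x) = (p+q)^-1 ([A, B.x] + (-1)^{|x||B|} [A.x, B]),
   i.e. [A,B].x = [A,B.x] + (-1)^{|x||B|}[A.x,B]; terms where B.x resp. A.x
   is zero (q = 0 resp. p = 0) vanish. *)
Fixpoint brf (f p q : nat) (bB : bool) (A B : Op) : Op :=
  match f with
  | 0 => cst (ls_br L (A [::]) (B [::]))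
  | f'.+1 => fun xs =>
      match xs with
      | [::] => 0
      | x :: xs' =>
        let t (i : bool) :=
          (if q is q'.+1 then
             brf f' p q' (bB (+) i) A (bul q 0 bB B (cst (ls_pr L i x))) xs'
           else 0)
          + ssgn K i bB *:
          (if p is p'.+1 then
             brf f' p' q bB (bul p 0 bB A (cst (ls_pr L i x))) B xs'
           else 0) in
        ((p + q)%:R)^-1 *: (t false + t true)
      end
  end.

Definition lbrx p q bB A B := brf (p + q) p q bB A B.

End LSA.

(* Main.v *)
Require Import Defs.
From HB Require Import structures.
From mathcomp Require Import all_boot all_order all_algebra.
From mathcomp Require Import zify ring.
From Stdlib Require Import FunctionalExtensionality.
Set Implicit Arguments. Unset Strict Implicit. Unset Printing Implicit Defensive.
Import GRing.Theory.
Local Open Scope ring_scope.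

Section Aux.
Variables (K : fieldType) (G : lmodType K) (L : lie_superalgebra G).
Local Notation pr := (ls_pr L).
Local Notation br := (ls_br L).
Local Notation Op := (Op G).

Lemma prD b x y : pr b (x + y) = pr b x + pr b y.
Proof. by rewrite -[x]scale1r ls_pr_lin !scale1r. Qed.
Lemma pr0 b : pr b 0 = 0.
Proof. by have := ls_pr_lin L b (-1) 0 0; rewrite scaleN1r oppr0 add0r scaleN1r addNr. Qed.
Lemma prZ b a x : pr b (a *: x) = a *: pr b x.
Proof. by rewrite -[a *: x]addr0 ls_pr_lin pr0 addr0. Qed.
Lemma pr_homog i x : homog L i (pr i x).
Proof. by rewrite /homog ls_pr_pr eqxx. Qed.
Lemma pr_hom c x i : homog L c x -> pr i x = if i == c then x else 0.
Proof. by move=> <-; rewrite ls_pr_pr; case: eqP => // ->. Qed.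
Lemma pr_split x : x = pr false x + pr true x.
Proof. by rewrite ls_pr_sum. Qed.

Lemma brDl x y z : br (x + y) z = br x z + br y z.
Proof. by rewrite -[x]scale1r ls_br_linl !scale1r. Qed.
Lemma br0l z : br 0 z = 0.
Proof. by have := ls_br_linl L (-1) 0 0 z; rewrite scaleN1r oppr0 add0r scaleN1r addNr. Qed.
Lemma brZl a x z : br (a *: x) z = a *: br x z.
Proof. by rewrite -[a *: x]addr0 ls_br_linl br0l addr0. Qed.
Lemma brDr x y z : br x (y + z) = br x y + br x z.
Proof. by rewrite -[y]scale1r ls_br_linr !scale1r. Qed.
Lemma br0r z : br z 0 = 0.
Proof. by have := ls_br_linr L (-1) z 0 0; rewrite scaleN1r oppr0 add0r scaleN1r addNr. Qed.
Lemma brZr a x z : br z (a *: x) = a *: br z x.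
Proof. by rewrite -[a *: x]addr0 ls_br_linr br0r addr0. Qed.

Lemma ssgnC b c : ssgn K b c = ssgn K c b.
Proof. by rewrite /ssgn andbC. Qed.
Lemma ssgn_addr c b d : ssgn K c (b (+) d) = ssgn K c b * ssgn K c d.
Proof. by case: c b d => [] [] []; rewrite /ssgn /= ?mulr1 ?mul1r ?mulrNN ?mulr1. Qed.
Lemma ssgn_addl c b d : ssgn K (b (+) d) c = ssgn K b c * ssgn K d c.
Proof. by rewrite ssgnC ssgn_addr ![ssgn _ c _]ssgnC. Qed.
Lemma ssgnK b c : ssgn K b c * ssgn K b c = 1.
Proof. by rewrite /ssgn; case: (b && c); rewrite ?mulrNN mulr1. Qed.
Lemma ssgn_f b : ssgn K false b = 1. Proof. by []. Qed.
Lemma ssgn_f' b : ssgn K b false = 1. Proof. by rewrite /ssgn andbF. Qed.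

Lemma opeq_pw n (A B : Op) : (forall xs, A xs = B xs) -> opeq n A B.
Proof. by move=> h xs _. Qed.
Lemma opeq_trans n (A B C : Op) : opeq n A B -> opeq n B C -> opeq n A C.
Proof. by move=> h1 h2 xs h; rewrite h1 // h2. Qed.
Lemma opeq_sym n (A B : Op) : opeq n A B -> opeq n B A.
Proof. by move=> h1 xs h; rewrite h1. Qed.

Lemma is_op_opeq n (X Y : Op) : opeq n X Y -> is_op n X -> is_op n Y.
Proof.
elim: n X Y => [//|n IH] X Y hXY [h1 h2]; split.
  move=> x; apply: (IH (app X x)); last exact: h1.
  by move=> xs hs; apply: hXY => /=; rewrite hs.
move=> a x y xs hs; rewrite /app /opadd /opscale -!hXY /= ?hs //.
exact: h2.
Qed.

Lemma is_op_pw n (X Y : Op) : (forall xs, X xs = Y xs) -> is_op n X -> is_op n Y.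
Proof. by move=> h; apply: is_op_opeq => xs _; apply: h. Qed.

Lemma is_op_add n (X Y : Op) : is_op n X -> is_op n Y -> is_op n (opadd X Y).
Proof.
elim: n X Y => [//|n IH] X Y [hX1 hX2] [hY1 hY2]; split.
  by move=> x; exact: (IH _ _ (hX1 x) (hY1 x)).
move=> a x y xs hs; rewrite /app /opadd /opscale.
have := hX2 a x y xs hs; have := hY2 a x y xs hs; rewrite /app /opadd /opscale => -> ->.
by rewrite scalerDr !addrA (addrAC _ (X (y :: xs))).
Qed.

Lemma is_op_scale n k (X : Op) : is_op n X -> is_op n (opscale k X).
Proof.
elim: n X => [//|n IH] X [hX1 hX2]; split.
  by move=> x; exact: (IH _ (hX1 x)).
move=> a x y xs hs; rewrite /app /opadd /opscale.
have := hX2 a x y xs hs; rewrite /app /opadd /opscale => ->.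
by rewrite scalerDr !scalerA mulrC.
Qed.

Lemma is_op_op0 n : is_op n (@op0 _ G).
Proof.
elim: n => [//|n IH]; split => // a x y xs hs.
by rewrite /app /opadd /opscale /op0 scaler0 addr0.
Qed.

Lemma is_op_app n (X : Op) x : is_op n.+1 X -> is_op n (app X x).
Proof. by case=> h _; apply: h. Qed.

Lemma is_op_lin n (X : Op) a x y xs : is_op n.+1 X -> size xs = n ->
  X ((a *: x + y) :: xs) = a *: X (x :: xs) + X (y :: xs).
Proof. by case=> _ h hs; apply: (h a x y xs hs). Qed.

Lemma is_op_0 n (X : Op) xs : is_op n.+1 X -> size xs = n -> X (0 :: xs) = 0.
Proof.
move=> h hs; have := is_op_lin (-1) 0 0 h hs.
by rewrite scaleN1r oppr0 add0r scaleN1r addNr.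
Qed.

Lemma is_op_split n (X : Op) x xs : is_op n.+1 X -> size xs = n ->
  X (x :: xs) = X (pr false x :: xs) + X (pr true x :: xs).
Proof.
move=> h hs; rewrite {1}(pr_split x) -[pr false x]scale1r (is_op_lin _ _ _ h hs).
by rewrite !scale1r.
Qed.

Definition dotp n (X : Op) x : Op := opscale n%:R (app X x).

Lemma is_op_dotp n m (X : Op) x : is_op n.+1 X -> is_op n (dotp m X x).
Proof. by move=> h; apply/is_op_scale/is_op_app. Qed.

Lemma dotp0 n (X : Op) xs : is_op n.+1 X -> size xs = n -> forall m, dotp m X 0 xs = 0.
Proof. by move=> h hs m; rewrite /dotp /opscale /app (is_op_0 h hs) scaler0. Qed.

Lemma bul_dot n b (X Y : Op) : bul L n 0 b X Y = dotp n X (Y [::]).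
Proof.
apply: functional_extensionality => xs; case: n => [|n] //=.
by rewrite /dotp /opscale /op0 scale0r.
Qed.

Lemma has_parity_scale n b k (X : Op) : has_parity L n b X -> has_parity L n b (opscale k X).
Proof.
elim: n b X => [|n IH] b X /=.
  by rewrite /homog /opscale => h; rewrite prZ h.
by move=> h c x hx; apply: IH; apply: h.
Qed.

Lemma has_parity_dotp n m b c (X : Op) x : homog L c x -> has_parity L n.+1 b X ->
  has_parity L n (b (+) c) (dotp m X x).
Proof. by move=> hx h; apply/has_parity_scale/h. Qed.

End Aux.

Section Alg.
Variables (K : fieldType) (G : lmodType K).
Lemma alg_add (k s t : K) (u1 u2 v1 v2 w1 w2 z1 z2 : G) :
  k *: ((u1 + u2 + s *: (v1 + v2)) + (w1 + w2 + t *: (z1 + z2))) =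
  k *: ((u1 + s *: v1) + (w1 + t *: z1)) + k *: ((u2 + s *: v2) + (w2 + t *: z2)).
Proof.
rewrite -scalerDr; congr (_ *: _); rewrite !scalerDr.
rewrite (addrACA u1 u2) (addrACA w1 w2).
by rewrite (addrACA (u1 + s *: v1)).
Qed.
Lemma alg_scale (k s t a : K) (u v w z : G) :
  k *: ((a *: u + s *: (a *: v)) + (a *: w + t *: (a *: z))) =
  a *: (k *: ((u + s *: v) + (w + t *: z))).
Proof.
transitivity (k *: (a *: ((u + s *: v) + (w + t *: z)))); last by rewrite !scalerA mulrC.
congr (_ *: _).
by rewrite !scalerDr !scalerA (mulrC a s) (mulrC a t).
Qed.
Lemma alg_lin (k s t a : K) (u1 u2 v1 v2 w1 w2 z1 z2 : G) :
  k *: ((a *: u1 + u2 + s *: (a *: v1 + v2)) + (a *: w1 + w2 + t *: (a *: z1 + z2))) =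
  a *: (k *: ((u1 + s *: v1) + (w1 + t *: z1))) + k *: ((u2 + s *: v2) + (w2 + t *: z2)).
Proof. by rewrite alg_add alg_scale. Qed.
End Alg.

Section Brf.
Variables (K : fieldType) (G : lmodType K) (L : lie_superalgebra G).
Local Notation pr := (ls_pr L).
Local Notation br := (ls_br L).
Local Notation Op := (Op G).

Definition brQ f p q b (A B : Op) y : Op :=
  if q is q'.+1 then brf L f p q' b A (dotp q B y) else @op0 _ G.
Definition brP f p q b (A B : Op) y : Op :=
  if p is p'.+1 then brf L f p' q b (dotp p A y) B else @op0 _ G.

Lemma brf_S f p q b (A B : Op) x xs : brf L f.+1 p q b A B (x :: xs) =
  (p + q)%:R^-1 *: ((brQ f p q (b (+) false) A B (pr false x) xs
                      + ssgn K false b *: brP f p q b A B (pr false x) xs)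
                   + (brQ f p q (b (+) true) A B (pr true x) xs
                      + ssgn K true b *: brP f p q b A B (pr true x) xs)).
Proof. by case: p; case: q. Qed.

Lemma brf_nil f p q b (A B : Op) : brf L f.+1 p q b A B [::] = 0.
Proof. by []. Qed.

Lemma brf_op0r f : forall p q b (A B : Op), (forall xs, B xs = 0) ->
  forall xs, brf L f p q b A B xs = 0.
Proof.
elim: f => [|f IH] p q b A B hB xs; first by rewrite /= hB br0r.
case: xs => [//|x xs]; rewrite brf_S.
have hQ : forall b' y, brQ f p q b' A B y xs = 0.
  move=> b' y; case: q => [//|q] /=; apply: IH => zs.
  by rewrite /dotp /opscale /app hB scaler0.
have hP : forall y, brP f p q b A B y xs = 0.
  by move=> y; clear hQ; case: p => [//|p] /=; apply: IH.
by rewrite !hQ !hP !scaler0 !addr0 scaler0.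
Qed.

Lemma brf_op0l f : forall p q b (A B : Op), (forall xs, A xs = 0) ->
  forall xs, brf L f p q b A B xs = 0.
Proof.
elim: f => [|f IH] p q b A B hA xs; first by rewrite /= hA br0l.
case: xs => [//|x xs]; rewrite brf_S.
have hQ : forall b' y, brQ f p q b' A B y xs = 0.
  by move=> b' y; case: q => [//|q] /=; apply: IH.
have hP : forall y, brP f p q b A B y xs = 0.
  move=> y; clear hQ; case: p => [//|p] /=; apply: IH => zs.
  by rewrite /dotp /opscale /app hA scaler0.
by rewrite !hQ !hP !scaler0 !addr0 scaler0.
Qed.

Lemma brf_eq f : forall p q b (A A' B B' : Op), (p + q)%N = f ->
  opeq p A A' -> opeq q B B' -> opeq f (brf L f p q b A B) (brf L f p q b A' B').
Proof.
elim: f => [|f IH] p q b A A' B B' hf hA hB xs hs.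
  move: hf => /eqP; rewrite addn_eq0 => /andP [/eqP hp /eqP hq]; subst.
  by rewrite /= hA // hB.
case: xs hs => [//|x xs] hs; have {}hs : size xs = f by case: hs.
rewrite !brf_S.
have hQ : forall b' y, brQ f p q b' A B y xs = brQ f p q b' A' B' y xs.
  move=> b' y; case: q hf hB => [//|q] hf hB /=; apply: IH => //; first by lia.
  by move=> zs hz; rewrite /dotp /opscale /app hB //= hz.
have hP : forall y, brP f p q b A B y xs = brP f p q b A' B' y xs.
  move=> y; clear hQ; case: p hf hA => [//|p] hf hA /=; apply: IH => //; first by lia.
  by move=> zs hz; rewrite /dotp /opscale /app hA //= hz.
by rewrite !hQ !hP.
Qed.

Lemma dotp_addr n (A1 A2 : Op) y : dotp n (opadd A1 A2) y = opadd (dotp n A1 y) (dotp n A2 y).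
Proof. by apply: functional_extensionality => zs; rewrite /dotp /opscale /opadd /app scalerDr. Qed.
Lemma dotp_scaler n a (A : Op) y : dotp n (opscale a A) y = opscale a (dotp n A y).
Proof. by apply: functional_extensionality => zs; rewrite /dotp /opscale /app !scalerA mulrC. Qed.

Lemma brf_addl f : forall p q b (A1 A2 B : Op) xs,
  brf L f p q b (opadd A1 A2) B xs = brf L f p q b A1 B xs + brf L f p q b A2 B xs.
Proof.
elim: f => [|f IH] p q b A1 A2 B xs; first by rewrite /= brDl.
case: xs => [|x xs]; first by rewrite addr0.
rewrite !brf_S.
have hQ : forall b' y, brQ f p q b' (opadd A1 A2) B y xs =
   brQ f p q b' A1 B y xs + brQ f p q b' A2 B y xs.
  by move=> b' y; case: q => [|q] /=; [rewrite /op0 addr0 | apply: IH].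
have hP : forall y, brP f p q b (opadd A1 A2) B y xs =
   brP f p q b A1 B y xs + brP f p q b A2 B y xs.
  by move=> y; clear hQ; case: p => [|p] /=; [rewrite /op0 addr0 | rewrite dotp_addr; apply: IH].
by rewrite !hQ !hP alg_add.
Qed.

Lemma brf_scalel f : forall p q b a (A B : Op) xs,
  brf L f p q b (opscale a A) B xs = a *: brf L f p q b A B xs.
Proof.
elim: f => [|f IH] p q b a A B xs; first by rewrite /= brZl.
case: xs => [|x xs]; first by rewrite scaler0.
rewrite !brf_S.
have hQ : forall b' y, brQ f p q b' (opscale a A) B y xs = a *: brQ f p q b' A B y xs.
  by move=> b' y; case: q => [|q] /=; [rewrite /op0 scaler0 | apply: IH].
have hP : forall y, brP f p q b (opscale a A) B y xs = a *: brP f p q b A B y xs.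
  by move=> y; clear hQ; case: p => [|p] /=; [rewrite /op0 scaler0 | rewrite dotp_scaler; apply: IH].
by rewrite !hQ !hP alg_scale.
Qed.

Lemma brf_addr f : forall p q b (A B1 B2 : Op) xs,
  brf L f p q b A (opadd B1 B2) xs = brf L f p q b A B1 xs + brf L f p q b A B2 xs.
Proof.
elim: f => [|f IH] p q b A B1 B2 xs; first by rewrite /= brDr.
case: xs => [|x xs]; first by rewrite addr0.
rewrite !brf_S.
have hQ : forall b' y, brQ f p q b' A (opadd B1 B2) y xs =
   brQ f p q b' A B1 y xs + brQ f p q b' A B2 y xs.
  by move=> b' y; case: q => [|q] /=; [rewrite /op0 addr0 | rewrite dotp_addr; apply: IH].
have hP : forall y, brP f p q b A (opadd B1 B2) y xs =
   brP f p q b A B1 y xs + brP f p q b A B2 y xs.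
  by move=> y; clear hQ; case: p => [|p] /=; [rewrite /op0 addr0 | apply: IH].
by rewrite !hQ !hP alg_add.
Qed.

Lemma brf_scaler f : forall p q b a (A B : Op) xs,
  brf L f p q b A (opscale a B) xs = a *: brf L f p q b A B xs.
Proof.
elim: f => [|f IH] p q b a A B xs; first by rewrite /= brZr.
case: xs => [|x xs]; first by rewrite scaler0.
rewrite !brf_S.
have hQ : forall b' y, brQ f p q b' A (opscale a B) y xs = a *: brQ f p q b' A B y xs.
  by move=> b' y; case: q => [|q] /=; [rewrite /op0 scaler0 | rewrite dotp_scaler; apply: IH].
have hP : forall y, brP f p q b A (opscale a B) y xs = a *: brP f p q b A B y xs.
  by move=> y; clear hQ; case: p => [|p] /=; [rewrite /op0 scaler0 | apply: IH].
by rewrite !hQ !hP alg_scale.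
Qed.

Lemma dotp_lin n m (X : Op) a y1 y2 : is_op n.+1 X ->
  opeq n (dotp m X (a *: y1 + y2)) (opadd (opscale a (dotp m X y1)) (dotp m X y2)).
Proof.
move=> h zs hz; rewrite /dotp /opadd /opscale /app (is_op_lin _ _ _ h hz).
by rewrite scalerDr !scalerA mulrC.
Qed.

Lemma brf_is_op f : forall p q b (A B : Op), (p + q)%N = f -> is_op p A -> is_op q B ->
  is_op f (brf L f p q b A B).
Proof.
elim: f => [//|f IH] p q b A B hf hA hB.
have hQ : forall b' y, is_op f (brQ f p q b' A B y).
  move=> b' y; case: q hf hB => [|q] hf hB /=; first exact: is_op_op0.
  by apply: IH => //; [lia | apply: is_op_dotp].
have hP : forall y, is_op f (brP f p q b A B y).
  move=> y; clear hQ; case: p hf hA => [|p] hf hA /=; first exact: is_op_op0.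
  by apply: IH => //; [lia | apply: is_op_dotp].
have hQl : forall b' a y1 y2 xs, size xs = f -> brQ f p q b' A B (a *: y1 + y2) xs =
    a *: brQ f p q b' A B y1 xs + brQ f p q b' A B y2 xs.
  move=> b' a y1 y2 xs hs; clear hQ hP; case: q hf hB => [|q] hf hB /=.
    by rewrite /op0 scaler0 addr0.
  have hf' : (p + q)%N = f by lia.
  rewrite (@brf_eq f p q b' A A (dotp q.+1 B (a *: y1 + y2))
     (opadd (opscale a (dotp q.+1 B y1)) (dotp q.+1 B y2)) hf' (fun _ _ => erefl) (dotp_lin _ _ _ _ hB) xs hs).
  by rewrite brf_addr brf_scaler.
have hPl : forall a y1 y2 xs, size xs = f -> brP f p q b A B (a *: y1 + y2) xs =
    a *: brP f p q b A B y1 xs + brP f p q b A B y2 xs.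
  move=> a y1 y2 xs hs; clear hQ hP hQl; case: p hf hA => [|p] hf hA /=.
    by rewrite /op0 scaler0 addr0.
  have hf' : (p + q)%N = f by lia.
  rewrite (@brf_eq f p q b (dotp p.+1 A (a *: y1 + y2))
     (opadd (opscale a (dotp p.+1 A y1)) (dotp p.+1 A y2)) B B hf' (dotp_lin _ _ _ _ hA) (fun _ _ => erefl) xs hs).
  by rewrite brf_addl brf_scalel.
split.
  move=> x; apply: (is_op_pw (X := opscale (p + q)%:R^-1 (opadd
     (opadd (brQ f p q (b (+) false) A B (pr false x))
            (opscale (ssgn K false b) (brP f p q b A B (pr false x))))
     (opadd (brQ f p q (b (+) true) A B (pr true x))
            (opscale (ssgn K true b) (brP f p q b A B (pr true x))))))).
    by move=> xs; rewrite /app brf_S.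
  by apply/is_op_scale/is_op_add; apply/is_op_add => //; apply/is_op_scale.
move=> a x y xs hs; rewrite /app /opadd /opscale !brf_S.
by rewrite !prD !prZ !hQl // !hPl // alg_lin.
Qed.

End Brf.

Section Alg1.
Variables (K : fieldType) (G : lmodType K).
Lemma alg_lin1 (s t a : K) (u1 u2 v1 v2 w1 w2 z1 z2 : G) :
  ((a *: u1 + u2 + s *: (a *: v1 + v2)) + (a *: w1 + w2 + t *: (a *: z1 + z2))) =
  a *: ((u1 + s *: v1) + (w1 + t *: z1)) + ((u2 + s *: v2) + (w2 + t *: z2)).
Proof. by have := alg_lin 1 s t a u1 u2 v1 v2 w1 w2 z1 z2; rewrite !scale1r. Qed.
End Alg1.

Section Circ.
Variables (K : fieldType) (G : lmodType K) (L : lie_superalgebra G).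
Local Notation pr := (ls_pr L).
Local Notation br := (ls_br L).
Local Notation Op := (Op G).

Lemma circf_S f p q b (A B : Op) x xs : circf L f.+1 p.+1 q.+1 b A B (x :: xs) =
  (circf L f p.+1 q (b (+) false) A (app B (pr false x)) xs
     + ssgn K b false *: circf L f p q.+1 b (app A (pr false x)) B xs)
  + (circf L f p.+1 q (b (+) true) A (app B (pr true x)) xs
     + ssgn K b true *: circf L f p q.+1 b (app A (pr true x)) B xs).
Proof. by []. Qed.

Lemma circf_op0l f : forall p q b (A B : Op), (forall xs, A xs = 0) ->
  forall xs, circf L f p q b A B xs = 0.
Proof.
elim: f => [|f IH] p q b A B hA xs.
  by case: q => [|q]; case: p => [|p] //=; rewrite /app hA.
case: q => [|q]; first by case: p => [|p] //=; rewrite /app hA.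
case: p => [//|p]; case: xs => [//|x xs]; rewrite circf_S.
rewrite !(IH p.+1 q _ A) // !(IH p q.+1 _ (app A _)) //; last by move=> zs; rewrite /app hA.
  by rewrite !scaler0 !addr0.
by move=> zs; rewrite /app hA.
Qed.

Lemma circf_eq f : forall p q b (A A' B B' : Op), (p + q)%N = f ->
  opeq p A A' -> opeq q B B' -> opeq (p + q).-1 (circf L f p q b A B) (circf L f p q b A' B').
Proof.
elim: f => [|f IH] p q b A A' B B' hf hA hB xs hs.
  move: hf => /eqP; rewrite addn_eq0 => /andP [/eqP hp /eqP hq]; subst.
  by [].
case: q hf hB hs => [|q] hf hB hs.
  case: p hf hA hs => [//|p] hf hA hs /=; rewrite /app hB // hA //=.
  by rewrite hs addn0.
case: p hf hA hs => [//|p] hf hA hs.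
have hs' : size xs = (p + q).+1 by rewrite hs addSn addnS.
case: xs hs hs' => [//|x xs] hs hs'; have {}hs' : size xs = (p + q)%N by case: hs'.
rewrite !circf_S.
have e1 : forall b' y, circf L f p.+1 q b' A (app B y) xs = circf L f p.+1 q b' A' (app B' y) xs.
  move=> b' y; apply: IH => //; first by lia.
  by move=> zs hz; rewrite /app hB //= hz.
have e2 : forall y, circf L f p q.+1 b (app A y) B xs = circf L f p q.+1 b (app A' y) B' xs.
  move=> y; apply: IH => //; first by lia.
    by move=> zs hz; rewrite /app hA //= hz.
  by rewrite hs' addnS.
by rewrite !e1 !e2.
Qed.


Lemma circf_addl f : forall p q b (A1 A2 B : Op) xs,
  circf L f p q b (opadd A1 A2) B xs = circf L f p q b A1 B xs + circf L f p q b A2 B xs.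
Proof.
elim: f => [|f IH] p q b A1 A2 B xs.
  by case: q => [|q]; case: p => [|p] //=; rewrite /op0 addr0.
case: q => [|q]; first by case: p => [|p] //=; rewrite /op0 addr0.
case: p => [|p]; first by rewrite /= /op0 addr0.
case: xs => [|x xs]; first by rewrite /= addr0.
rewrite !circf_S !IH.
have e : forall y, app (opadd A1 A2) y = opadd (app A1 y) (app A2 y) by [].
rewrite !scalerDr.
set a1 := circf L f p.+1 q _ A1 _ xs. set a2 := circf L f p.+1 q _ A2 _ xs.
set a3 := circf L f p.+1 q _ A1 _ xs. set a4 := circf L f p.+1 q _ A2 _ xs.
set c1 := _ *: circf L f p q.+1 b _ B xs. set c2 := _ *: circf L f p q.+1 b _ B xs.
set c3 := _ *: circf L f p q.+1 b _ B xs. set c4 := _ *: circf L f p q.+1 b _ B xs.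
by rewrite (addrACA a1) (addrACA a3) (addrACA (a1 + c1)).
Qed.

Lemma circf_scalel f : forall p q b a (A B : Op) xs,
  circf L f p q b (opscale a A) B xs = a *: circf L f p q b A B xs.
Proof.
elim: f => [|f IH] p q b a A B xs.
  by case: q => [|q]; case: p => [|p] //=; rewrite /op0 scaler0.
case: q => [|q]; first by case: p => [|p] //=; rewrite /op0 scaler0.
case: p => [|p]; first by rewrite /= /op0 scaler0.
case: xs => [|x xs]; first by rewrite /= scaler0.
rewrite !circf_S !IH.
have e : forall y, app (opscale a A) y = opscale a (app A y) by [].
by rewrite !scalerDr !scalerA (mulrC a (ssgn K b false)) (mulrC a (ssgn K b true)).
Qed.

Lemma circf_linr f : forall p q b a (A B1 B2 : Op), is_op p A -> (p + q)%N = f ->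
  opeq (p + q).-1 (circf L f p q b A (opadd (opscale a B1) B2))
     (opadd (opscale a (circf L f p q b A B1)) (circf L f p q b A B2)).
Proof.
elim: f => [|f IH] p q b a A B1 B2 hA hf xs hs.
  move: hf => /eqP; rewrite addn_eq0 => /andP [/eqP hp /eqP hq]; subst.
  by rewrite /= /opadd /opscale /op0 scaler0 addr0.
case: q hf hs => [|q] hf hs.
  case: p hf hA hs => [|p] hf hA hs /=; first by rewrite /opadd /opscale /op0 scaler0 addr0.
  by rewrite /app /opadd /opscale (is_op_lin _ _ _ hA) // hs addn0.
case: p hf hA hs => [|p] hf hA hs; first by rewrite /= /opadd /opscale /op0 scaler0 addr0.
have hs' : size xs = (p + q).+1 by rewrite hs addSn addnS.
case: xs hs hs' => [//|x xs] hs hs'; have {}hs' : size xs = (p + q)%N by case: hs'.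
rewrite /opadd /opscale !circf_S.
have e1 : forall b' y, circf L f p.+1 q b' A (app (opadd (opscale a B1) B2) y) xs =
   a *: circf L f p.+1 q b' A (app B1 y) xs + circf L f p.+1 q b' A (app B2 y) xs.
  by move=> b' y; apply: (IH p.+1 q b' a A (app B1 y) (app B2 y)) => //; lia.
have e2 : forall y, circf L f p q.+1 b (app A y) (opadd (opscale a B1) B2) xs =
   a *: circf L f p q.+1 b (app A y) B1 xs + circf L f p q.+1 b (app A y) B2 xs.
  move=> y; apply: (IH p q.+1 b a (app A y) B1 B2) => //; try lia.
  exact: is_op_app.
by rewrite !e1 !e2 alg_lin1.
Qed.

Lemma circf_op0r f : forall p q b (A : Op), is_op p A -> (p + q)%N = f ->
  opeq (p + q).-1 (circf L f p q b A (@op0 _ G)) (@op0 _ G).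
Proof.
elim: f => [|f IH] p q b A hA hf xs hs.
  by move: hf => /eqP; rewrite addn_eq0 => /andP [/eqP hp /eqP hq]; subst.
case: q hf hs => [|q] hf hs.
  case: p hf hA hs => [//|p] hf hA hs /=.
  by rewrite /app /op0 (is_op_0 hA) // hs addn0.
case: p hf hA hs => [//|p] hf hA hs.
have hs' : size xs = (p + q).+1 by rewrite hs addSn addnS.
case: xs hs hs' => [//|x xs] hs hs'; have {}hs' : size xs = (p + q)%N by case: hs'.
rewrite !circf_S.
have e0 : forall y, app (@op0 _ G) y = @op0 _ G by [].
have e1 : forall b' y, circf L f p.+1 q b' A (app (@op0 _ G) y) xs = 0.
  by move=> b' y; apply: (IH p.+1 q b' A) => //; lia.
have e2 : forall y, circf L f p q.+1 b (app A y) (@op0 _ G) xs = 0.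
  move=> y; apply: (IH p q.+1 b (app A y)) => //; try lia.
  exact: is_op_app.
by rewrite !e1 !e2 !scaler0 !addr0.
Qed.


Lemma app_lin n (X : Op) a y1 y2 : is_op n.+1 X ->
  opeq n (app X (a *: y1 + y2)) (opadd (opscale a (app X y1)) (app X y2)).
Proof. by case=> _ h; apply: h. Qed.

Lemma circf_is_op f : forall p q b (A B : Op), is_op p A -> is_op q B -> (p + q)%N = f ->
  is_op (p + q).-1 (circf L f p q b A B).
Proof.
elim: f => [|f IH] p q b A B hA hB hf.
  by move: hf => /eqP; rewrite addn_eq0 => /andP [/eqP hp /eqP hq]; subst.
case: q hf hB => [|q] hf hB.
  case: p hf hA => [|p] hf hA; first exact: is_op_op0.
  by rewrite addn0; apply: is_op_app.
case: p hf hA => [|p] hf hA; first exact: is_op_op0.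
have -> : (p.+1 + q.+1).-1 = (p + q).+1 by rewrite addSn addnS.
have hC : forall b' y, is_op (p + q) (circf L f p.+1 q b' A (app B y)).
  move=> b' y; have -> : (p + q)%N = (p.+1 + q).-1 by rewrite addSn.
  by apply: IH => //; [apply: is_op_app | lia].
have hD : forall y, is_op (p + q) (circf L f p q.+1 b (app A y) B).
  move=> y; have -> : (p + q)%N = (p + q.+1).-1 by rewrite addnS.
  by apply: IH => //; [apply: is_op_app | lia].
split.
  move=> x; apply: (is_op_pw (X := opadd
     (opadd (circf L f p.+1 q (b (+) false) A (app B (pr false x)))
            (opscale (ssgn K b false) (circf L f p q.+1 b (app A (pr false x)) B)))
     (opadd (circf L f p.+1 q (b (+) true) A (app B (pr true x)))
            (opscale (ssgn K b true) (circf L f p q.+1 b (app A (pr true x)) B))))).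
    by move=> xs; rewrite /app circf_S.
  by apply/is_op_add; apply/is_op_add => //; apply/is_op_scale.
move=> a x y xs hs; rewrite /app /opadd /opscale !circf_S !prD !prZ.
have e1 : forall b' y1 y2, circf L f p.+1 q b' A (app B (a *: y1 + y2)) xs =
   a *: circf L f p.+1 q b' A (app B y1) xs + circf L f p.+1 q b' A (app B y2) xs.
  move=> b' y1 y2.
  rewrite (@circf_eq f p.+1 q b' A A _ _ _ (fun _ _ => erefl) (app_lin a y1 y2 hB)); last 2 first.
    by lia.
    by rewrite addSn.
  by apply: circf_linr => //; lia.
have e2 : forall y1 y2, circf L f p q.+1 b (app A (a *: y1 + y2)) B xs =
   a *: circf L f p q.+1 b (app A y1) B xs + circf L f p q.+1 b (app A y2) B xs.
  move=> y1 y2.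
  rewrite (@circf_eq f p q.+1 b _ _ B B _ (app_lin a y1 y2 hA) (fun _ _ => erefl)); last 2 first.
    by lia.
    by rewrite addnS.
  by rewrite circf_addl circf_scalel.
by rewrite !e1 !e2 alg_lin1.
Qed.

Lemma circf_scaler f p q b a (A B : Op) : is_op p A -> (p + q)%N = f ->
  opeq (p + q).-1 (circf L f p q b A (opscale a B)) (opscale a (circf L f p q b A B)).
Proof.
move=> hA hf xs hs.
rewrite (@circf_eq f p q b A A (opscale a B) (opadd (opscale a B) (@op0 _ G)) hf (fun _ _ => erefl)) //.
  rewrite (circf_linr b a B (@op0 _ G) hA hf hs) /opadd /opscale.
  by rewrite (circf_op0r b hA hf hs) /op0 addr0.
by move=> zs _; rewrite /opadd /op0 addr0.
Qed.

Lemma circf_fuel f p q b (A B : Op) : (p + q)%N = f -> circf L f p q b A B = circ L p q b A B.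
Proof. by move=> <-. Qed.

Lemma brf_fuel f p q b (A B : Op) : (p + q)%N = f -> brf L f p q b A B = lbrx L p q b A B.
Proof. by move=> <-. Qed.

End Circ.

Section Coef.
Variables (K : fieldType) (HK : [pchar K] =i pred0).

Lemma natK_neq0 n : (0 < n)%N -> (n%:R : K) != 0.
Proof. by move=> h; rewrite ((pcharf0P K).1 HK) -lt0n. Qed.

Definition bulcoef p q : K := (p`! * q`!)%:R / ((p + q).-1)`!%:R.

Lemma fact_neq0 n : (n`!%:R : K) != 0.
Proof. by apply: natK_neq0; apply: fact_gt0. Qed.

Lemma bulc1 a b : ((a.+1 + b.+2).-1)%:R * bulcoef a.+1 b.+2 = bulcoef a.+1 b.+1 * (b.+2)%:R.
Proof.
rewrite /bulcoef.
have -> : (a.+1 + b.+2).-1 = (a + b).+2 by rewrite addSn !addnS.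
have -> : (a.+1 + b.+1).-1 = (a + b).+1 by rewrite addSn !addnS.
have h1 := fact_neq0 (a + b).+1.
rewrite (factS (a + b).+1) (factS b.+1).
move: h1; set F := ((a + b).+1)`!; set Fa := (a.+1)`!; set Fb := (b.+1)`! => h1.
have h2 := natK_neq0 (ltn0Sn (a + b).+1).
clearbody F Fa Fb; rewrite !natrM.
by field; rewrite h1 -!natrD natK_neq0.
Qed.

Lemma bulc2 a b : ((a.+2 + b.+1).-1)%:R * bulcoef a.+2 b.+1 = bulcoef a.+1 b.+1 * (a.+2)%:R.
Proof.
rewrite /bulcoef.
have -> : (a.+2 + b.+1).-1 = (a + b).+2 by rewrite !addSn !addnS.
have -> : (a.+1 + b.+1).-1 = (a + b).+1 by rewrite addSn !addnS.
have h1 := fact_neq0 (a + b).+1.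
rewrite (factS (a + b).+1) (factS a.+1).
move: h1; set F := ((a + b).+1)`!; set Fa := (a.+1)`!; set Fb := (b.+1)`! => h1.
have h2 := natK_neq0 (ltn0Sn (a + b).+1).
clearbody F Fa Fb; rewrite !natrM.
by field; rewrite h1 -!natrD natK_neq0.
Qed.

Lemma bulc3 a : ((a.+1 + 1).-1)%:R * bulcoef a.+1 1 = (a.+1)%:R.
Proof.
rewrite /bulcoef addn1 /= muln1.
by rewrite divff ?mulr1 // fact_neq0.
Qed.

End Coef.

Section Bul.
Variables (K : fieldType) (G : lmodType K) (L : lie_superalgebra G).
Local Notation pr := (ls_pr L).
Local Notation br := (ls_br L).
Local Notation Op := (Op G).

Lemma bul_SS p q b (A B : Op) :
  bul L p.+1 q.+1 b A B = opscale (@bulcoef K p.+1 q.+1) (circ L p.+1 q.+1 b A B).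
Proof. by []. Qed.
Lemma bul_S0 p b (A B : Op) : bul L p.+1 0 b A B = dotp p.+1 A (B [::]).
Proof. by []. Qed.

Lemma circf_0 f p b (A B : Op) : circf L f p.+1 0 b A B = app A (B [::]).
Proof. by case: f. Qed.

Lemma dotp00 (X : Op) x xs : dotp 0 X x xs = 0.
Proof. by rewrite /dotp /opscale scale0r. Qed.

Lemma bul_op0l p q b (A B : Op) : (forall xs, A xs = 0) -> forall xs, bul L p q b A B xs = 0.
Proof.
move=> hA xs; case: p => [//|p]; case: q => [|q].
  by rewrite bul_S0 /dotp /opscale /app hA scaler0.
by rewrite bul_SS /opscale /circ circf_op0l // scaler0.
Qed.

Lemma bul_eq p q b (A A' B B' : Op) : opeq p A A' -> opeq q B B' ->
  opeq (p + q).-1 (bul L p q b A B) (bul L p q b A' B').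
Proof.
move=> hA hB xs hs; case: p hA hs => [//|p] hA hs; case: q hB hs => [|q] hB hs.
  by rewrite !bul_S0 /dotp /opscale /app hB // hA //= hs addn0.
by rewrite !bul_SS /opscale /circ (circf_eq L b erefl hA hB hs).
Qed.

Lemma bul_addl p q b (A1 A2 B : Op) xs :
  bul L p q b (opadd A1 A2) B xs = bul L p q b A1 B xs + bul L p q b A2 B xs.
Proof.
case: p => [|p]; first by rewrite /= /op0 addr0.
case: q => [|q]; first by rewrite !bul_S0 /dotp /opscale /app /opadd scalerDr.
by rewrite !bul_SS /opscale /circ circf_addl scalerDr.
Qed.

Lemma bul_scalel p q b a (A B : Op) xs :
  bul L p q b (opscale a A) B xs = a *: bul L p q b A B xs.
Proof.
case: p => [|p]; first by rewrite /= /op0 scaler0.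
case: q => [|q]; first by rewrite !bul_S0 /dotp /opscale /app !scalerA mulrC.
by rewrite !bul_SS /opscale /circ circf_scalel !scalerA mulrC.
Qed.

Lemma bul_is_op p q b (A B : Op) : is_op p A -> is_op q B -> is_op (p + q).-1 (bul L p q b A B).
Proof.
move=> hA hB; case: p hA => [|p] hA; first exact: is_op_op0.
case: q hB => [|q] hB.
  by rewrite bul_S0 addn0; apply: is_op_dotp.
by rewrite bul_SS; apply/is_op_scale/circf_is_op.
Qed.

Lemma dotp_op0 n m (X : Op) : is_op n.+1 X -> opeq n (dotp m X 0) (@op0 _ G).
Proof. by move=> h zs hz; rewrite (dotp0 h hz). Qed.

Lemma app_op0 n (X : Op) : is_op n.+1 X -> opeq n (app X 0) (@op0 _ G).
Proof. by move=> h zs hz; rewrite /app (is_op_0 h hz). Qed.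

Variable HK : [pchar K] =i pred0.

Lemma D1 m s bY (X Y : Op) x c zs : is_op m X -> is_op s Y -> homog L c x -> (0 < s)%N ->
  size zs = (m + s).-2 ->
  ((m + s).-1)%:R *: bul L m s bY X Y (x :: zs) =
  bul L m s.-1 (bY (+) c) X (dotp s Y x) zs + ssgn K bY c *: bul L m.-1 s bY (dotp m X x) Y zs.
Proof.
move=> hX hY hx; case: s hY => [//|s] hY _ hs.
case: m hX hs => [|m] hX hs; first by rewrite /= /op0 !scaler0 addr0.
rewrite bul_SS /opscale /circ addSn circf_S !(pr_hom _ hx).
have z1 : forall b', circf L (m + s.+1) m.+1 s b' X (app Y 0) zs = 0.
  move=> b'; rewrite (@circf_eq _ _ L _ m.+1 s b' X X (app Y 0) (@op0 _ G)) //; try lia.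
  - by rewrite (@circf_op0r _ _ L (m + s.+1) m.+1 s b' X hX _ zs) //; lia.
  - exact: app_op0.
have z2 : circf L (m + s.+1) m s.+1 bY (app X 0) Y zs = 0.
  rewrite (@circf_eq _ _ L _ m s.+1 bY (app X 0) (@op0 _ G) Y Y) //; try lia.
  - by rewrite circf_op0l.
  - exact: app_op0.
have e : ((m.+1 + s.+1).-1)%:R *: (@bulcoef K m.+1 s.+1 *:
   (circf L (m + s.+1) m.+1 s (bY (+) c) X (app Y x) zs +
    ssgn K bY c *: circf L (m + s.+1) m s.+1 bY (app X x) Y zs)) =
  ((m.+1 + s.+1).-1)%:R *: (@bulcoef K m.+1 s.+1 *: ((circf L (m + s.+1) m.+1 s
     (bY (+) false) X (app Y (if false == c then x else 0)) zs +
     ssgn K bY false *: circf L (m + s.+1) m s.+1 bY (app X (if false == c then x else 0)) Y zs) +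
   (circf L (m + s.+1) m.+1 s (bY (+) true) X (app Y (if true == c then x else 0)) zs +
     ssgn K bY true *: circf L (m + s.+1) m s.+1 bY (app X (if true == c then x else 0)) Y zs))).
  by case: c {hx} => /=; rewrite !z1 z2 !scaler0 !addr0 ?add0r.
rewrite -e {e z1 z2} scalerA.
have t1 : ((m.+1 + s.+1).-1)%:R * @bulcoef K m.+1 s.+1 *:
    circf L (m + s.+1) m.+1 s (bY (+) c) X (app Y x) zs =
    bul L m.+1 s (bY (+) c) X (dotp s.+1 Y x) zs.
  case: s hY hs => [|s] hY hs.
    by rewrite (bulc3 HK) bul_S0 circf_0 /dotp /opscale /app /= scale1r.
  rewrite (bulc1 HK) bul_SS /opscale /circ -scalerA; congr (_ *: _).
  rewrite (circf_fuel _ _ _ (p := m.+1) (q := s.+1)); last by lia.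
  rewrite /circ /dotp (@circf_scaler _ _ L _ m.+1 s.+1 (bY (+) c) s.+2%:R X (app Y x) hX erefl zs) //.
  lia.
have t2 : ((m.+1 + s.+1).-1)%:R * @bulcoef K m.+1 s.+1 *:
    circf L (m + s.+1) m s.+1 bY (app X x) Y zs =
    bul L m s.+1 bY (dotp m.+1 X x) Y zs.
  clear t1; case: m hX hs => [|m] hX hs; first by rewrite /= scaler0.
  rewrite (bulc2 HK) bul_SS /opscale /circ -scalerA; congr (_ *: _).
  rewrite (circf_fuel _ _ _ (p := m.+1) (q := s.+1)); last by lia.
  by rewrite /circ /dotp circf_scalel.
by rewrite scalerDr -t1 -t2 !scalerA (mulrC (ssgn K bY c)).
Qed.


Lemma brQ_hom f m s b (X Y : Op) x c i zs : is_op s Y -> homog L c x -> size zs = f ->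
  (m + s)%N = f.+1 ->
  brQ L f m s b X Y (pr i x) zs = if i == c then lbrx L m s.-1 b X (dotp s Y x) zs else 0.
Proof.
move=> hY hx hs hf; rewrite (pr_hom _ hx).
case: s hY hf => [|s] hY hf.
  by case: (i == c) => //; rewrite /lbrx (brf_op0r L _ _ _ _ X) // => zs'; rewrite dotp00.
case: (i == c) => /=; first by rewrite brf_fuel //; lia.
rewrite (@brf_eq _ _ L f m s b X X (dotp s.+1 Y 0) (@op0 _ G)) //; try lia.
  by rewrite (brf_op0r L).
exact: dotp_op0.
Qed.

Lemma brP_hom f m s b (X Y : Op) x c i zs : is_op m X -> homog L c x -> size zs = f ->
  (m + s)%N = f.+1 ->
  brP L f m s b X Y (pr i x) zs = if i == c then lbrx L m.-1 s b (dotp m X x) Y zs else 0.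
Proof.
move=> hX hx hs hf; rewrite (pr_hom _ hx).
case: m hX hf => [|m] hX hf.
  by case: (i == c) => //; rewrite /lbrx (brf_op0l L) // => zs'; rewrite dotp00.
case: (i == c) => /=; first by rewrite brf_fuel //; lia.
rewrite (@brf_eq _ _ L f m s b (dotp m.+1 X 0) (@op0 _ G) Y Y) //; try lia.
  by rewrite (brf_op0l L).
exact: dotp_op0.
Qed.

Lemma B1 m s bY (X Y : Op) x c zs : is_op m X -> is_op s Y -> homog L c x ->
  size zs = (m + s).-1 ->
  (m + s)%:R *: lbrx L m s bY X Y (x :: zs) =
  lbrx L m s.-1 (bY (+) c) X (dotp s Y x) zs + ssgn K c bY *: lbrx L m.-1 s bY (dotp m X x) Y zs.
Proof.
move=> hX hY hx hs.
case E: (m + s)%N => [|f].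
  move: E => /eqP; rewrite addn_eq0 => /andP [/eqP hm /eqP hs0]; subst.
  by rewrite /lbrx /= /cst !dotp00 br0r br0l scale0r scaler0 addr0.
rewrite E /= in hs; rewrite /lbrx E brf_S E scalerA mulfV ?natK_neq0 // scale1r.
rewrite !(brQ_hom _ _ _ hY hx hs E) !(brP_hom _ _ _ hX hx hs E).
by case: c {hx} => /=; rewrite ?scaler0 ?addr0 ?add0r.
Qed.

End Bul.

Section Final.
Variables (K : fieldType) (G : lmodType K).

Lemma perm6 (x1 x2 x3 x4 x5 x6 : G) :
  x1 + (x3 + (x5 + (x4 + (x2 + x6)))) = x1 + (x2 + (x3 + (x4 + (x5 + x6)))).
Proof.
congr (_ + _).
rewrite (addrCA x4 x2) (addrCA x5 x2) (addrCA x3 x2); congr (_ + (_ + _)).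
by rewrite addrCA.
Qed.

Lemma final_alg (a1 a2 a3 a4 a5 a6 : G) bB bC c :
  a1 + ssgn K bB (bC (+) c) *: a2 + ssgn K bC c *: ((a3 + ssgn K (bB (+) c) bC *: a4)
     + ssgn K c bB *: (a5 + ssgn K bB bC *: a6))
  = (a1 + ssgn K bC c *: a3 + ssgn K c (bB (+) bC) *: a5)
     + ssgn K bB bC *: (a4 + ssgn K c bB *: (a2 + ssgn K bC c *: a6)).
Proof.
rewrite !scalerDr !scalerA -!addrA [RHS]perm6.
congr (_ + (_ *: _ + (_ *: _ + (_ *: _ + (_ *: _ + _ *: _))))); 
  by case: bB bC c => [] [] []; rewrite /ssgn /=; ring.
Qed.
End Final.

Section Main.
Variables (K : fieldType) (G : lmodType K) (L : lie_superalgebra G).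
Variable HK : [pchar K] =i pred0.
Local Notation pr := (ls_pr L).
Local Notation Op := (Op G).

Lemma lbrx_op0r p q b (A B : Op) : (forall xs, B xs = 0) -> forall xs, lbrx L p q b A B xs = 0.
Proof. by move=> h xs; rewrite /lbrx (brf_op0r L). Qed.
Lemma lbrx_op0l p q b (A B : Op) : (forall xs, A xs = 0) -> forall xs, lbrx L p q b A B xs = 0.
Proof. by move=> h xs; rewrite /lbrx (brf_op0l L). Qed.
Lemma lbrx_addr p q b (A B1 B2 : Op) xs :
  lbrx L p q b A (opadd B1 B2) xs = lbrx L p q b A B1 xs + lbrx L p q b A B2 xs.
Proof. exact: brf_addr. Qed.
Lemma lbrx_scaler p q b a (A B : Op) xs :
  lbrx L p q b A (opscale a B) xs = a *: lbrx L p q b A B xs.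
Proof. exact: brf_scaler. Qed.
Lemma lbrx_addl p q b (A1 A2 B : Op) xs :
  lbrx L p q b (opadd A1 A2) B xs = lbrx L p q b A1 B xs + lbrx L p q b A2 B xs.
Proof. exact: brf_addl. Qed.
Lemma lbrx_scalel p q b a (A B : Op) xs :
  lbrx L p q b (opscale a A) B xs = a *: lbrx L p q b A B xs.
Proof. exact: brf_scalel. Qed.
Lemma lbrx_eq p q b (A A' B B' : Op) : opeq p A A' -> opeq q B B' ->
  opeq (p + q) (lbrx L p q b A B) (lbrx L p q b A' B').
Proof. by move=> hA hB; apply: brf_eq. Qed.
Lemma lbrx_is_op p q b (A B : Op) : is_op p A -> is_op q B -> is_op (p + q) (lbrx L p q b A B).
Proof. by move=> hA hB; apply: brf_is_op. Qed.

Lemma is_op_dotp' n (X : Op) x : is_op n X -> is_op n.-1 (dotp n X x).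
Proof.
case: n => [|n] h; last exact: is_op_dotp.
by apply: (is_op_pw (X := @op0 _ G)) => [xs|]; [rewrite dotp00 | apply: is_op_op0].
Qed.

Definition Idn p q r bB bC (A B C : Op) :=
  opeq ((p + q + r).-1)
    (bul L (p + q) r bC (lbrx L p q bB A B) C)
    (opadd (lbrx L p (q + r).-1 (bB (+) bC) A (bul L q r bC B C))
           (opscale (ssgn K bB bC) (lbrx L (p + r).-1 q bB (bul L p r bC A C) B))).

Lemma Id_r0 p q bB bC (A B C : Op) : is_op p A -> is_op q B -> has_parity L 0 bC C ->
  Idn p q 0 bB bC A B C.
Proof.
move=> hA hB hC xs hs; rewrite /opadd /opscale !bul_dot !addn0.
rewrite !addn0 in hs.
by rewrite /dotp /opscale /app (B1 HK bB hA hB hC hs) ssgnC.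
Qed.

Lemma Id_pq0 r bB bC (A B C : Op) : Idn 0 0 r bB bC A B C.
Proof.
move=> xs hs; rewrite /opadd /opscale.
rewrite (lbrx_op0r _ _ _ _ (B := bul L 0 r bC B C)) // (lbrx_op0l _ _ _ (A := bul L 0 r bC A C)) //.
by rewrite scaler0 addr0.
Qed.


Lemma W2 p q r (bB bC c : bool) (A B C : Op) (y : G) (zs : seq G) :
  ((0 < q)%N -> Idn p q.-1 r.+1 (bB (+) c) bC A (dotp q B y) C) ->
  size zs = (p + q + r.+1).-2 ->
  bul L (p + q).-1 r.+1 bC (lbrx L p q.-1 (bB (+) c) A (dotp q B y)) C zs =
  lbrx L p (q + r).-1 ((bB (+) bC) (+) c) A (bul L q.-1 r.+1 bC (dotp q B y) C) zs
  + ssgn K (bB (+) c) bC *: lbrx L (p + r) q.-1 (bB (+) c) (bul L p r.+1 bC A C) (dotp q B y) zs.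
Proof.
case: q => [|q] hIH hz.
  rewrite (bul_op0l L) => [|xs]; last by rewrite (lbrx_op0r _ _ _ _ (B := dotp 0 B y)) // => ?; rewrite dotp00.
  rewrite (lbrx_op0r _ _ _ _ (B := bul L 0 r.+1 bC _ C)) //.
  rewrite (lbrx_op0r _ _ _ _ (B := dotp 0 B y)) => [|?]; last by rewrite dotp00.
  by rewrite scaler0 addr0.
have e1 : (p + q.+1).-1 = (p + q)%N by rewrite addnS.
have e2 : (q.+1 + r).-1 = (q + r.+1).-1 by rewrite addSn addnS.
have e3 : (p + r)%N = (p + r.+1).-1 by rewrite addnS.
rewrite e1 e2 e3 /= addbAC.
apply: (hIH erefl zs); rewrite hz; lia.
Qed.

Lemma W3 p q r (bB bC c : bool) (A B C : Op) (y : G) (zs : seq G) :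
  ((0 < p)%N -> Idn p.-1 q r.+1 bB bC (dotp p A y) B C) ->
  size zs = (p + q + r.+1).-2 ->
  bul L (p + q).-1 r.+1 bC (lbrx L p.-1 q bB (dotp p A y) B) C zs =
  lbrx L p.-1 (q + r) (bB (+) bC) (dotp p A y) (bul L q r.+1 bC B C) zs
  + ssgn K bB bC *: lbrx L (p + r).-1 q bB (bul L p.-1 r.+1 bC (dotp p A y) C) B zs.
Proof.
case: p => [|p] hIH hz.
  rewrite (bul_op0l L) => [|xs]; last by rewrite (lbrx_op0l _ _ _ (A := dotp 0 A y)) // => ?; rewrite dotp00.
  rewrite (lbrx_op0l _ _ _ (A := dotp 0 A y)) => [|?]; last by rewrite dotp00.
  rewrite (lbrx_op0l _ _ _ (A := bul L 0 r.+1 bC _ C)) //.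
  by rewrite scaler0 addr0.
have e1 : (p.+1 + q).-1 = (p + q)%N by rewrite addSn.
have e2 : (q + r)%N = (q + r.+1).-1 by rewrite addnS.
have e3 : (p.+1 + r).-1 = (p + r.+1).-1 by rewrite addSn addnS.
rewrite e1 e2 e3 /=.
apply: (hIH erefl zs); rewrite hz; lia.
Qed.


Lemma lbrx_D1r m q r b bC c (X B C : Op) y zs : is_op q B -> is_op r.+1 C -> homog L c y ->
  size zs = (m + q + r).-1 ->
  lbrx L m (q + r.+1).-2 b X (dotp (q + r.+1).-1 (bul L q r.+1 bC B C) y) zs =
  lbrx L m (q + r.+1).-2 b X (opadd (bul L q r (bC (+) c) B (dotp r.+1 C y))
          (opscale (ssgn K bC c) (bul L q.-1 r.+1 bC (dotp q B y) C))) zs.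
Proof.
move=> hB hC hy hz; case: q hB hz => [|q] hB hz.
  transitivity (0 : G).
    by apply: lbrx_op0r => ?; rewrite /dotp /opscale /app /= /op0 scaler0.
  by symmetry; apply: lbrx_op0r => ?; rewrite /opadd /opscale /= /op0 scaler0 addr0.
apply: lbrx_eq => //; last by rewrite hz; lia.
by move=> zs' hz'; apply: (D1 HK).
Qed.

Lemma lbrx_D1l p q r b bC c (A C Y : Op) y zs : is_op p A -> is_op r.+1 C -> homog L c y ->
  size zs = (p + q + r).-1 ->
  lbrx L (p + r.+1).-2 q b (dotp (p + r.+1).-1 (bul L p r.+1 bC A C) y) Y zs =
  lbrx L (p + r.+1).-2 q b (opadd (bul L p r (bC (+) c) A (dotp r.+1 C y))
          (opscale (ssgn K bC c) (bul L p.-1 r.+1 bC (dotp p A y) C))) Y zs.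
Proof.
move=> hA hC hy hz; case: p hA hz => [|p] hA hz.
  transitivity (0 : G).
    by apply: lbrx_op0l => ?; rewrite /dotp /opscale /app /= /op0 scaler0.
  by symmetry; apply: lbrx_op0l => ?; rewrite /opadd /opscale /= /op0 scaler0 addr0.
apply: lbrx_eq => //; last by rewrite hz; lia.
by move=> zs' hz'; apply: (D1 HK).
Qed.

Lemma Id_step p q r bB bC (A B C : Op) :
  (forall p' q' r' bB' bC' (A' B' C' : Op), (p' + q' + r' < p + q + r.+1)%N ->
     is_op p' A' -> is_op q' B' -> is_op r' C' -> has_parity L r' bC' C' ->
     Idn p' q' r' bB' bC' A' B' C') ->
  (0 < p + q)%N -> is_op p A -> is_op q B -> is_op r.+1 C -> has_parity L r.+1 bC C ->
  Idn p q r.+1 bB bC A B C.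
Proof.
move=> IH hpq hA hB hC hPC xs hs.
set n := (p + q + r).-1.
have hs' : size xs = n.+1 by rewrite hs /n; lia.
case: xs hs hs' => [//|x zs] hs hs'.
have hz : size zs = n by case: hs'.
have hLop : is_op n.+1 (bul L (p + q) r.+1 bC (lbrx L p q bB A B) C).
  have -> : n.+1 = ((p + q) + r.+1).-1 by rewrite /n; lia.
  by apply: bul_is_op => //; apply: lbrx_is_op.
have hRop : is_op n.+1 (opadd (lbrx L p (q + r.+1).-1 (bB (+) bC) A (bul L q r.+1 bC B C))
           (opscale (ssgn K bB bC) (lbrx L (p + r.+1).-1 q bB (bul L p r.+1 bC A C) B))).
  apply: is_op_add; last apply: is_op_scale.
    have -> : n.+1 = (p + (q + r.+1).-1)%N by rewrite /n; lia.
    by apply: lbrx_is_op => //; apply: bul_is_op.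
  have -> : n.+1 = ((p + r.+1).-1 + q)%N by rewrite /n; lia.
  by apply: lbrx_is_op => //; apply: bul_is_op.
rewrite (is_op_split L x hLop hz) (is_op_split L x hRop hz).
suff H : forall c y, homog L c y ->
   bul L (p + q) r.+1 bC (lbrx L p q bB A B) C (y :: zs) =
   opadd (lbrx L p (q + r.+1).-1 (bB (+) bC) A (bul L q r.+1 bC B C))
           (opscale (ssgn K bB bC) (lbrx L (p + r.+1).-1 q bB (bul L p r.+1 bC A C) B)) (y :: zs).
  by rewrite !(H _ _ (pr_homog _ _ _)).
move=> c y hy.
apply: (scalerI (natK_neq0 HK (ltn0Sn n))).
have eL : n.+1%:R *: bul L (p + q) r.+1 bC (lbrx L p q bB A B) C (y :: zs) =
   bul L (p + q) r (bC (+) c) (lbrx L p q bB A B) (dotp r.+1 C y) zs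
   + ssgn K bC c *: bul L (p + q).-1 r.+1 bC (dotp (p + q) (lbrx L p q bB A B) y) C zs.
  have -> : n.+1 = ((p + q) + r.+1).-1 by rewrite /n; lia.
  apply: (D1 HK) => //; first exact: lbrx_is_op.
  rewrite hz /n; lia.
have eT1 := IH p q r bB (bC (+) c) A B (dotp r.+1 C y) (ltac:(lia)) hA hB
   (is_op_dotp _ _ hC) (has_parity_dotp _ hy hPC) zs.
have {eT1} eT1 := eT1 (etrans hz (esym (erefl n))).
rewrite /opadd /opscale addbA in eT1.
have hB1 : opeq (p + q).-1 (dotp (p + q) (lbrx L p q bB A B) y)
   (opadd (lbrx L p q.-1 (bB (+) c) A (dotp q B y))
          (opscale (ssgn K c bB) (lbrx L p.-1 q bB (dotp p A y) B))).
  by move=> zs' hz'; apply: (B1 HK).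
have eT2 : bul L (p + q).-1 r.+1 bC (dotp (p + q) (lbrx L p q bB A B) y) C zs =
   bul L (p + q).-1 r.+1 bC (lbrx L p q.-1 (bB (+) c) A (dotp q B y)) C zs
   + ssgn K c bB *: bul L (p + q).-1 r.+1 bC (lbrx L p.-1 q bB (dotp p A y) B) C zs.
  rewrite (bul_eq L bC hB1 (fun _ _ => erefl)); last by rewrite hz /n; lia.
  by rewrite bul_addl bul_scalel.
have hz2 : size zs = (p + q + r.+1).-2 by rewrite hz /n; lia.
have I2 : (0 < q)%N -> Idn p q.-1 r.+1 (bB (+) c) bC A (dotp q B y) C.
  move=> hq; apply: IH => //; first by lia.
  exact: is_op_dotp'.
have I3 : (0 < p)%N -> Idn p.-1 q r.+1 bB bC (dotp p A y) B C.
  move=> hp; apply: IH => //; first by lia.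
  exact: is_op_dotp'.
rewrite eL eT1 eT2 (@W2 p q r bB bC c A B C y zs I2 hz2) (@W3 p q r bB bC c A B C y zs I3 hz2).
have eRHS : n.+1%:R *: opadd (lbrx L p (q + r.+1).-1 (bB (+) bC) A (bul L q r.+1 bC B C))
    (opscale (ssgn K bB bC) (lbrx L (p + r.+1).-1 q bB (bul L p r.+1 bC A C) B)) (y :: zs) =
  n.+1%:R *: lbrx L p (q + r.+1).-1 (bB (+) bC) A (bul L q r.+1 bC B C) (y :: zs)
  + ssgn K bB bC *: (n.+1%:R *: lbrx L (p + r.+1).-1 q bB (bul L p r.+1 bC A C) B (y :: zs)).
  by rewrite /opadd /opscale scalerDr !scalerA mulrC.
rewrite eRHS.
have eR1 : n.+1%:R *: lbrx L p (q + r.+1).-1 (bB (+) bC) A (bul L q r.+1 bC B C) (y :: zs) =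
   lbrx L p (q + r.+1).-1.-1 (bB (+) bC (+) c) A (dotp (q + r.+1).-1 (bul L q r.+1 bC B C) y) zs
   + ssgn K c (bB (+) bC) *: lbrx L p.-1 (q + r.+1).-1 (bB (+) bC) (dotp p A y) (bul L q r.+1 bC B C) zs.
  have -> : n.+1 = (p + (q + r.+1).-1)%N by rewrite /n; lia.
  apply: (B1 HK) => //; first exact: bul_is_op.
  rewrite hz /n; lia.
have hD1 : opeq (q + r.+1).-2 (dotp (q + r.+1).-1 (bul L q r.+1 bC B C) y)
   (opadd (bul L q r (bC (+) c) B (dotp r.+1 C y))
          (opscale (ssgn K bC c) (bul L q.-1 r.+1 bC (dotp q B y) C))).
  by move=> zs' hz'; apply: (D1 HK).
have eR2 : n.+1%:R *: lbrx L (p + r.+1).-1 q bB (bul L p r.+1 bC A C) B (y :: zs) =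
   lbrx L (p + r.+1).-1 q.-1 (bB (+) c) (bul L p r.+1 bC A C) (dotp q B y) zs
   + ssgn K c bB *: lbrx L (p + r.+1).-1.-1 q bB (dotp (p + r.+1).-1 (bul L p r.+1 bC A C) y) B zs.
  have -> : n.+1 = ((p + r.+1).-1 + q)%N by rewrite /n; lia.
  apply: (B1 HK) => //; first exact: bul_is_op.
  rewrite hz /n; lia.
have hD2 : opeq (p + r.+1).-2 (dotp (p + r.+1).-1 (bul L p r.+1 bC A C) y)
   (opadd (bul L p r (bC (+) c) A (dotp r.+1 C y))
          (opscale (ssgn K bC c) (bul L p.-1 r.+1 bC (dotp p A y) C))).
  by move=> zs' hz'; apply: (D1 HK).
rewrite eR1 eR2.
rewrite (@lbrx_D1r p q r (bB (+) bC (+) c) bC c A B C y zs hB hC hy hz).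
rewrite (@lbrx_D1l p q r bB bC c A C B y zs hA hC hy hz).
rewrite lbrx_addr lbrx_scaler lbrx_addl lbrx_scalel.
have eq : (q + r.+1).-1 = (q + r)%N by rewrite addnS.
have ep : (p + r.+1).-1 = (p + r)%N by rewrite addnS.
rewrite !eq !ep.
exact: final_alg.
Qed.


Lemma Id_all N : forall p q r bB bC (A B C : Op), (p + q + r <= N)%N ->
  is_op p A -> is_op q B -> is_op r C -> has_parity L r bC C -> Idn p q r bB bC A B C.
Proof.
elim: N => [|N IH] p q r bB bC A B C hN hA hB hC hPC.
  case: r hC hPC hN => [|r] hC hPC hN; first exact: Id_r0.
  by exfalso; move: hN; rewrite addnS.
case: r hC hPC hN => [|r] hC hPC hN; first exact: Id_r0.
case: p hA hN => [|p] hA hN; case: q hB hN => [|q] hB hN; try exact: Id_pq0;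
  apply: Id_step => // p' q' r' bB' bC' A' B' C' hlt; apply: IH; lia.
Qed.

End Main.

Unset Implicit Arguments.
Theorem proposition4p3 (K : fieldType) (HK : [pchar K] =i pred0)
  (G : lmodType K) (L : lie_superalgebra G)
  (p q r : nat) (bA bB bC : bool) (A B C : Op G) :
  is_op p A -> is_op q B -> is_op r C ->
  has_parity L p bA A -> has_parity L q bB B -> has_parity L r bC C ->
  opeq ((p + q + r).-1)
    (bul L (p + q) r bC (lbrx L p q bB A B) C)
    (opadd (lbrx L p (q + r).-1 (bB (+) bC) A (bul L q r bC B C))
           (opscale (ssgn K bB bC) (lbrx L (p + r).-1 q bB (bul L p r bC A C) B))).
Proof.
move=> hA hB hC _ _ hPC.
exact: (Id_all HK bB (leqnn (p + q + r)) hA hB hC hPC).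
Qed.
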